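(* Fix $L\ge1$. (a) $(2^\omega,(g^L_n|_{\mathbb{D}^L_n})_{n\in\omega})$ is a strongly complex situation. (b) If $s\in\omega^{<\omega}$ is strictly increasing with $2\le|s|\le L$, $\alpha\in\mathbb{D}^L_{s(|s|-1)}$, and $g_s(\alpha)$, $g_{s^-}(\alpha)$ are both defined, then $g_s(\alpha)\ne g_{s^-}(\alpha)$. (c) If $s\in\omega^{<\omega}$ is strictly increasing with $|s|=L+1$ and $g_s(\alpha)$, $g_{s^-}(\alpha)$ are both defined, then $g_s(\alpha)=g_{s^-}(\alpha)$.
   Context: Let $\psi:\omega\to2^{<\omega}$ enumerate finite binary sequences by length then lexicographically. Let $q_0=0$, $q_{n+1}=3\cdot2^{q_n}$, $t_n:=\psi(n)0^{2^{q_n}-|\psi(n)|}$, $S_n:=\{2^{q_n}j:j\ge1\}$, $N_t=\{\alpha\in 2^\omega:t\subseteq\alpha\}$. Define $\theta$ on $\{j\ge1\}$ depending on $L$: if $L=1$, $\theta(j)=2j+1$; if $L\ge2$, with $P_L:=\{2^p3^l:p\in\omega,l<L-2\}$ and $M_L:=\{2^{31}\cdot3\cdot k:k\ge1,k\notin P_L\}$, $\theta(j)=3j$ if $j\notin M_L\cup(M_L+1)$, $3j+3$ if $j\in M_L$, $3j-3$ if $j\in M_L+1$. Let $\theta_n(k)=k$ for $k\notin S_n$ and $\theta_n(2^{q_n}j)=2^{q_n}\theta(j)$. Define $g_n=g^L_n:N_{t_n0}\to N_{t_n1}$ by $g_n(\alpha)(k)=1$ if $k=2^{q_n}$, $g_n(\alpha)(k)=\alpha(\theta_n(k))$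 otherwise. Let $\mathbb{D}^1_n:=N_{t_n0}$ and for $L\ge2$, $\mathbb{D}^L_n:=\{\alpha\in N_{t_n0}:\forall m\le n\ \alpha(2^{q_n}3^m)\ne\alpha(2^{q_n}3^{m+1})\}$. For $s\in\omega^{<\omega}$ nonempty, $g_s:=g_{s(0)}\circ\dots\circ g_{s(|s|-1)}$ (partial composition) and $s^-:=(s(0),\dots,s(|s|-2))$. A strongly complex situation is $(X,(f_n))$ with $X$ a nonempty zero-dimensional perfect Polish space, each $f_n$ a partial continuous open map with clopen domain and range, $\Delta(X)\subseteq\overline{\bigcup_n\mathrm{Graph}(f_n)}\setminus\bigcup_n\mathrm{Graph}(f_n)$, and the restriction of any $f_n$ to any nonempty open subset of its domain not countable-to-one. *)

(* Defs.v *)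
From mathcomp Require Import all_boot.
From Stdlib Require Import ClassicalEpsilon.
Set Implicit Arguments. Unset Strict Implicit. Unset Printing Implicit Defensive.

Definition cantor := nat -> bool.

Definition agree (k : nat) (a b : cantor) : Prop := forall i, i < k -> a i = b i.

Definition is_open (U : cantor -> Prop) : Prop :=
  forall a, U a -> exists k, forall b, agree k a b -> U b.
Definition is_closed (U : cantor -> Prop) : Prop := is_open (fun a => ~ U a).
Definition clopen (U : cantor -> Prop) : Prop := is_open U /\ is_closed U.

Definition image (D : cantor -> Prop) (f : cantor -> cantor) : cantor -> Prop :=
  fun b => exists a, D a /\ f a = b.

Definition continuous_on (D : cantor -> Prop) (f : cantor -> cantor) : Prop :=
  forall a, D a -> forall k, exists m, forall b, D b -> agree m a b -> agree k (f a) (f b).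

Definition open_map_on (D : cantor -> Prop) (f : cantor -> cantor) : Prop :=
  forall U, is_open U -> (forall a, U a -> D a) -> is_open (image U f).

Definition countable_set (S : cantor -> Prop) : Prop :=
  exists h : cantor -> nat, forall a b, S a -> S b -> h a = h b -> a = b.

Definition countable_to_one_on (U : cantor -> Prop) (f : cantor -> cantor) : Prop :=
  forall y, countable_set (fun a => U a /\ f a = y).

(* (a,b) lies in the closure (in 2^omega x 2^omega) of the union of the
   graphs of the partial maps f n with domains D n *)
Definition in_closure_graphs (D : nat -> cantor -> Prop) (f : nat -> cantor -> cantor)
  (a b : cantor) : Prop :=
  forall k, exists n c, D n c /\ agree k c a /\ agree k (f n c) b.

Definition perfect_cantor : Prop :=
  forall (a : cantor) k, exists b, agree k a b /\ b <> a.

Definition strongly_complex (D : nat -> cantor -> Prop) (f : nat -> cantor -> cantor) : Prop :=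
  [/\ (exists a : cantor, True) /\ perfect_cantor,
      (forall n, [/\ clopen (D n), clopen (image (D n) (f n)),
                     continuous_on (D n) (f n) & open_map_on (D n) (f n)]),
      (forall a, in_closure_graphs D f a a /\ (forall n, D n a -> f n a <> a))
    & (forall n U, is_open U -> (forall a, U a -> D n a) -> (exists a, U a) ->
          ~ countable_to_one_on U (f n))].

(* psi n : n-th finite binary sequence in the order by length then
   lexicographically (0 < 1): the l = floor(log2 (n+1)) bits, most
   significant first, of (n+1) - 2^l. *)
Definition psi (n : nat) : seq bool :=
  let l := trunc_log 2 n.+1 in
  let r := n.+1 - 2 ^ l in
  [seq odd (r %/ 2 ^ (l - 1 - i)) | i <- iota 0 l].

Fixpoint q (n : nat) : nat :=
  match n with 0 => 0 | n'.+1 => 3 * 2 ^ (q n') end.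

Definition t (n : nat) : seq bool := psi n ++ nseq (2 ^ q n - size (psi n)) false.

Definition inN (s : seq bool) (a : cantor) : bool :=
  all (fun i => a i == nth false s i) (iota 0 (size s)).

Definition inP (L k : nat) : Prop := exists p l, l < L - 2 /\ k = 2 ^ p * 3 ^ l.
Definition inM (L j : nat) : Prop := exists k, 1 <= k /\ ~ inP L k /\ j = 2 ^ 31 * 3 * k.

Definition dec (P : Prop) : bool := if excluded_middle_informative P then true else false.

Definition theta (L j : nat) : nat :=
  if L == 1 then 2 * j + 1
  else if dec (inM L j) then 3 * j + 3
  else if dec (inM L (j - 1)) then 3 * j - 3
  else 3 * j.

Definition theta_n (L n k : nat) : nat :=
  if (0 < k) && (2 ^ q n %| k) then 2 ^ q n * theta L (k %/ 2 ^ q n) else k.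

(* g^L_n; its domain is N_{t_n 0} *)
Definition g (L n : nat) (a : cantor) : cantor :=
  fun k => if k == 2 ^ q n then true else a (theta_n L n k).

Definition domg (n : nat) (a : cantor) : bool := inN (rcons (t n) false) a.

Definition DL (L n : nat) (a : cantor) : Prop :=
  domg n a /\
  (L != 1 -> forall m, m <= n -> a (2 ^ q n * 3 ^ m) <> a (2 ^ q n * 3 ^ m.+1)).

(* partial composition g_s = g_{s(0)} o ... o g_{s(|s|-1)} ; None = undefined *)
Definition gs (L : nat) (s : seq nat) (a : cantor) : option cantor :=
  foldr (fun n o => match o with
                    | Some b => if domg n b then Some (g L n b) else None
                    | None => None end) (Some a) s.

Definition sminus (s : seq nat) : seq nat := take (size s).-1 s.

(* Main.v *)
Require Import Defs.
From mathcomp Require Import all_boot zify.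
From Stdlib Require Import ClassicalEpsilon FunctionalExtensionality.
Set Implicit Arguments. Unset Strict Implicit. Unset Printing Implicit Defensive.

Local Notation Q n := (2 ^ q n).


Lemma dec_true (P : Prop) : dec P = true <-> P.
Proof. by rewrite /dec; case: excluded_middle_informative. Qed.
Lemma dec_false (P : Prop) : dec P = false <-> ~ P.
Proof. by rewrite /dec; case: excluded_middle_informative. Qed.

Lemma Q_gt0 n : 0 < Q n. Proof. by rewrite expn_gt0. Qed.

Lemma q_lt n : q n < q n.+1.
Proof. rewrite /= . have := ltn_expl (q n) (isT : 1 < 2). lia. Qed.

Lemma q_mono m n : m < n -> q m < q n.
Proof.
elim: n => // n IH; rewrite ltnS leq_eqVlt => /orP [/eqP -> | /IH h]; first exact: q_lt.
exact: ltn_trans h (q_lt n).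
Qed.

Lemma q_le m n : m <= n -> q m <= q n.
Proof. rewrite leq_eqVlt => /orP [/eqP -> //| /q_mono]; exact: ltnW. Qed.

Lemma q_ge n : n <= q n.
Proof. elim: n => // n IH; have := q_lt n; lia. Qed.

Lemma q2 : q 2 = 24. Proof. by []. Qed.

Lemma q_gap n z : 2 <= n -> n < z -> q n + 31 <= q z.
Proof.
move=> h2 hz.
have hz1 : q n <= q z.-1 by apply: q_le; lia.
have h24 : 24 <= q z.-1 by rewrite -q2; apply: q_le; lia.
have -> : z = (z.-1).+1 by lia.
rewrite /=. have := ltn_expl (q z.-1) (isT : 1 < 2).
(* 2^x >= x+1, need 3 * 2^x >= x + 31 when x >= 24 *)
move: (q z.-1) h24 hz1 => x hx hn hlt.
have : 2 ^ 5 <= 2 ^ x by apply: leq_pexp2l => //; lia.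
lia.
Qed.

Lemma Q_dvd m n : q m <= q n -> Q m %| Q n.
Proof. exact: dvdn_exp2l. Qed.

Lemma T_gt0 : 0 < 2 ^ 31. Proof. by rewrite expn_gt0. Qed.
Lemma T_2 : 2 %| 2 ^ 31. Proof. exact: (@dvdn_exp2l 2 1 31). Qed.

Lemma inM_dvd L j : inM L j -> [/\ 2 ^ 31 * 3 %| j, 0 < j & ~ inP L (j %/ (2 ^ 31 * 3))].
Proof.
case=> k [hk [hP ->]]; move: (2 ^ 31) T_gt0 => T hT; split.
- exact: dvdn_mulr.
- by rewrite !muln_gt0 hT.
- by rewrite mulKn // muln_gt0 hT.
Qed.

Lemma inM_2 L j : inM L j -> 2 %| j.
Proof. case/inM_dvd=> h _ _; apply: dvdn_trans h; move: (2 ^ 31) T_2 => T hT. exact: dvdn_mulr. Qed.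

Lemma inM_3 L j : inM L j -> 3 %| j.
Proof. case/inM_dvd=> h _ _; apply: dvdn_trans h; exact: dvdn_mull. Qed.

Lemma inM_pos L j : inM L j -> 0 < j.
Proof. by case/inM_dvd. Qed.

Lemma inM_S L j : inM L j -> ~ inM L j.+1.
Proof.
move=> /inM_2 h1 /inM_2 h2. have : 2 %| 1 by rewrite -(dvdn_addr 1 h1) addn1. by [].
Qed.

Lemma not_inM_pred L j p : (p = 2 \/ p = 3) -> p %| j -> 0 < j -> ~ inM L j.-1.
Proof.
move=> hp hj hj0 hM.
have hd : p %| j.-1 by case: hp => ->; [exact: inM_2 hM | exact: inM_3 hM].
have : p %| 1. by rewrite -(dvdn_addr 1 hd) addn1 prednK.
case: hp => -> //.
Qed.

Lemma theta1 L j : L = 1 -> theta L j = 2 * j + 1.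
Proof. by move=> ->. Qed.

Lemma thetaM L j : L != 1 -> inM L j -> theta L j = 3 * j + 3.
Proof. rewrite /theta => /negbTE -> /dec_true -> //. Qed.

Lemma thetaM1 L j : L != 1 -> ~ inM L j -> inM L (j - 1) -> theta L j = 3 * j - 3.
Proof. rewrite /theta => /negbTE -> /dec_false -> /dec_true -> //. Qed.

Lemma theta3 L j : L != 1 -> ~ inM L j -> ~ inM L (j - 1) -> theta L j = 3 * j.
Proof. rewrite /theta => /negbTE -> /dec_false -> /dec_false -> //. Qed.

Lemma theta_cases L j : L != 1 ->
  [\/ inM L j /\ theta L j = 3 * j + 3,
      ~ inM L j /\ inM L (j - 1) /\ theta L j = 3 * j - 3 |
      ~ inM L j /\ ~ inM L (j - 1) /\ theta L j = 3 * j].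
Proof.
move=> hL.
case: (excluded_middle_informative (inM L j)) => h1.
  by apply: Or31; split => //; exact: thetaM.
case: (excluded_middle_informative (inM L (j - 1))) => h2.
  by apply: Or32; do !split => //; exact: thetaM1.
by apply: Or33; do !split => //; exact: theta3.
Qed.

Lemma theta_le L j : theta L j <= 3 * j + 3.
Proof.
case: (eqVneq L 1) => [->|hL]; first by rewrite /theta /=; lia.
case: (theta_cases j hL) => [[_ ->]|[_ [_ ->]]|[_ [_ ->]]]; lia.
Qed.

Lemma theta_ge L j : 1 <= j -> 3 <= theta L j /\ j <= theta L j.
Proof.
move=> hj.
case: (eqVneq L 1) => [->|hL]; first by rewrite /theta /=; lia.
case: (theta_cases j hL) => [[_ ->]|[_ [h ->]]|[_ [_ ->]]]; try lia.
have := inM_pos h; lia.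
Qed.

Lemma theta_inj L j j' : 1 <= j -> 1 <= j' -> theta L j = theta L j' -> j = j'.
Proof.
move=> hj hj'.
case: (eqVneq L 1) => [->|hL]; first by rewrite /theta /=; lia.
case: (theta_cases j hL) => [[a1 ->]|[a1 [a2 ->]]|[a1 [a2 ->]]];
case: (theta_cases j' hL) => [[b1 ->]|[b1 [b2 ->]]|[b1 [b2 ->]]] => E.
all: first [ lia
 | (have := inM_pos a2; have := inM_pos b2; lia)
 | (exfalso; apply: (inM_S a1); (have -> : j.+1 = j' - 1 by (have := inM_pos b2; lia)); exact: b2)
 | (exfalso; apply: (inM_S b1); (have -> : j'.+1 = j - 1 by (have := inM_pos a2; lia)); exact: a2)
 | (exfalso; apply: b2; (have -> : j' - 1 = j by lia); exact: a1)
 | (exfalso; apply: a2; (have -> : j - 1 = j' by lia); exact: b1)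
 | (exfalso; apply: a1; (have -> : j = j' - 1 by (have := inM_pos b2; lia)); exact: b2)
 | (exfalso; apply: b1; (have -> : j' = j - 1 by (have := inM_pos a2; lia)); exact: a2) ].
Qed.

Lemma theta_mod6 L j : 1 <= j -> theta L j %% 6 != 2.
Proof.
move=> hj.
case: (eqVneq L 1) => [->|hL]; first by rewrite /theta /=; lia.
case: (theta_cases j hL) => [[_ ->]|[_ [_ ->]]|[_ [_ ->]]]; lia.
Qed.

Lemma theta_one L : theta L 1 = 3.
Proof.
case: (eqVneq L 1) => [->|hL]; first by [].
case: (theta_cases 1 hL) => [[h _]|[_ [h _]]|[_ [_ ->]]] //.
- by have := inM_2 h.
- by have := inM_pos h.
Qed.


Section TN.
Variables (L n : nat).

Lemma thn_nonS k : ~~ ((0 < k) && (Q n %| k)) -> theta_n L n k = k.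
Proof. by rewrite /theta_n => /negbTE ->. Qed.

Lemma thn_S k : 0 < k -> Q n %| k -> theta_n L n k = Q n * theta L (k %/ Q n).
Proof. by rewrite /theta_n => -> ->. Qed.

Lemma divQ_ge1 k : 0 < k -> Q n %| k -> 1 <= k %/ Q n.
Proof. move=> h0 hd; rewrite divn_gt0 ?Q_gt0 //; exact: dvdn_leq. Qed.

Lemma thn_ge k : k <= theta_n L n k.
Proof.
case h: ((0 < k) && (Q n %| k)); last by rewrite thn_nonS ?h.
case/andP: h => h0 hd; rewrite thn_S //.
have [_ hj] := theta_ge L (divQ_ge1 h0 hd).
rewrite -{1}(divnK hd) mulnC; exact: leq_mul.
Qed.

Lemma thn_le k : theta_n L n k <= 3 * k + 3 * Q n.
Proof.
case h: ((0 < k) && (Q n %| k)); last by rewrite thn_nonS ?h; lia.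
case/andP: h => h0 hd; rewrite thn_S //.
have := theta_le L (k %/ Q n).
have := divnK hd. move: (k %/ Q n) (theta L (k %/ Q n)) => j th <- hth.
have : Q n * th <= Q n * (3 * j + 3) by rewrite leq_mul2l hth orbT.
lia.
Qed.

Lemma thn_S_prop k : 0 < k -> Q n %| k -> 0 < theta_n L n k /\ Q n %| theta_n L n k.
Proof.
move=> h0 hd; rewrite thn_S //; split; last exact: dvdn_mulr.
have [h3 _] := theta_ge L (divQ_ge1 h0 hd). by rewrite muln_gt0 Q_gt0; lia.
Qed.

Lemma thn_inj k k' : theta_n L n k = theta_n L n k' -> k = k'.
Proof.
case h: ((0 < k) && (Q n %| k)); case h': ((0 < k') && (Q n %| k')).
- case/andP: h => h0 hd; case/andP: h' => h0' hd'.
  rewrite !thn_S // => /eqP; rewrite eqn_pmul2l ?Q_gt0 // => /eqP E.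
  have := theta_inj (divQ_ge1 h0 hd) (divQ_ge1 h0' hd') E.
  by move=> E2; rewrite -(divnK hd) -(divnK hd') E2.
- case/andP: h => h0 hd; rewrite (thn_nonS (k := k')) ?h' // => E.
  have [a b] := thn_S_prop h0 hd. by move: h'; rewrite -E a b.
- case/andP: h' => h0 hd; rewrite (thn_nonS (k := k)) ?h // => E.
  have [a b] := thn_S_prop h0 hd. by move: h; rewrite E a b.
- by rewrite !thn_nonS ?h ?h'.
Qed.

Lemma thn_Q : theta_n L n (Q n) = 3 * Q n.
Proof. rewrite thn_S ?Q_gt0 // divnn Q_gt0 theta_one; lia. Qed.

Lemma thn_small k : k < Q n -> theta_n L n k = k.
Proof.
move=> hk; apply: thn_nonS; apply/negP => /andP [h0 hd].
have := dvdn_leq h0 hd; lia.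
Qed.

Lemma thn_neqQ k : k <> Q n -> theta_n L n k <> Q n.
Proof.
move=> hk E.
case h: ((0 < k) && (Q n %| k)).
- case/andP: h => h0 hd; move: E; rewrite thn_S // => E.
  have [h3 _] := theta_ge L (divQ_ge1 h0 hd).
  have : Q n * theta L (k %/ Q n) >= Q n * 3 by rewrite leq_mul2l h3 orbT.
  have := Q_gt0 n; lia.
- by move: E; rewrite thn_nonS ?h.
Qed.

Lemma gE a k : g L n a k = if k == Q n then true else a (theta_n L n k).
Proof. by []. Qed.

Definition pinv (p : nat) : option nat :=
  match excluded_middle_informative (exists k, k <> Q n /\ theta_n L n k = p) with
  | left H => Some (proj1_sig (constructive_indefinite_description _ H))
  | right _ => None end.

Lemma inv_Some p k : pinv p = Some k -> k <> Q n /\ theta_n L n k = p.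
Proof.
rewrite /pinv; case: excluded_middle_informative => // H [<-].
by case: (constructive_indefinite_description _ H).
Qed.

Lemma inv_None p : pinv p = None -> forall k, k <> Q n -> theta_n L n k <> p.
Proof.
rewrite /pinv; case: excluded_middle_informative => // H _ k hk E.
by apply: H; exists k.
Qed.

Lemma inv_th k : k <> Q n -> pinv (theta_n L n k) = Some k.
Proof.
move=> hk; case E: (pinv (theta_n L n k)) => [k'|].
- by have [_ /thn_inj ->] := inv_Some E.
- by have := inv_None E hk.
Qed.

Definition pre (d b : cantor) : cantor :=
  fun p => match pinv p with Some k => b k | None => d p end.

Lemma pre_th d b k : k <> Q n -> pre d b (theta_n L n k) = b k.
Proof. by move=> hk; rewrite /pre inv_th. Qed.

Lemma g_pre d b : b (Q n) = true -> g L n (pre d b) = b.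
Proof.
move=> hb; apply: functional_extensionality => k; rewrite gE.
case: eqP => [->|hk] //; by rewrite pre_th.
Qed.

Lemma pre_agree K d d' b b' : agree K d d' -> agree K b b' -> agree K (pre d b) (pre d' b').
Proof.
move=> hd hb p hp; rewrite /pre.
case E: (pinv p) => [k|]; last exact: hd.
have [_ hk] := inv_Some E; apply: hb.
have := thn_ge k; lia.
Qed.

Lemma pre_g a : pre a (g L n a) = a.
Proof.
apply: functional_extensionality => p; rewrite /pre.
case E: (pinv p) => [k|] //.
have [hk <-] := inv_Some E; rewrite gE; case: eqP => // //.
Qed.

End TN.

Lemma size_psi n : size (psi n) = trunc_log 2 n.+1.
Proof. by rewrite /psi size_map size_iota. Qed.

Lemma n_lt_Q n : n < Q n.
Proof. have := ltn_expl (q n) (isT : 1 < 2); have := q_ge n; lia. Qed.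

Lemma size_psi_le n : size (psi n) <= n.
Proof.
rewrite size_psi; have := trunc_logP (isT : 1 < 2) (ltn0Sn n).
have := ltn_expl (trunc_log 2 n.+1) (isT : 1 < 2); lia.
Qed.

Lemma size_t n : size (t n) = Q n.
Proof.
rewrite /t size_cat size_nseq; have := size_psi_le n; have := n_lt_Q n; lia.
Qed.

Lemma domgP n a : domg n a <-> forall i, i <= Q n -> a i = nth false (rcons (t n) false) i.
Proof.
rewrite /domg /inN size_rcons size_t; split.
- move=> /allP h i hi; apply/eqP; apply: h; rewrite mem_iota; lia.
- move=> h; apply/allP => i; rewrite mem_iota => hi; apply/eqP; apply: h; lia.
Qed.

Lemma domg_Q n a : domg n a -> a (Q n) = false.
Proof. by move/domgP => h; rewrite h // nth_rcons size_t ltnn eqxx. Qed.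

Lemma domg_small n a i : domg n a -> i < Q n -> a i = nth false (t n) i.
Proof. by move/domgP => h hi; rewrite h ?nth_rcons ?size_t ?hi //; lia. Qed.

Definition dep (K : nat) (P : cantor -> Prop) := forall a b, agree K a b -> P a -> P b.

Lemma agree_sym K a b : agree K a b -> agree K b a.
Proof. by move=> h i hi; rewrite h. Qed.

Lemma agree_le K K' a b : K <= K' -> agree K' a b -> agree K a b.
Proof. move=> hK h i hi; apply: h; lia. Qed.

Lemma dep_clopen K (S T : cantor -> Prop) : (forall b, S b <-> T b) -> dep K T -> clopen S.
Proof.
move=> hST hd; split.
- move=> a /hST ha; exists K => b hab; apply/hST; exact: hd ha.
- move=> a ha; exists K => b hab hb; apply: ha; apply/hST; apply: hd (agree_sym hab) _.
  exact/hST.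
Qed.

Lemma DL_dep L n : dep (Q n * 3 ^ n.+1).+1 (DL L n).
Proof.
move=> a b hab [hd hc]; split.
- apply/domgP => i hi; rewrite -hab; last first.
    have : Q n <= Q n * 3 ^ n.+1 by rewrite leq_pmulr // expn_gt0.
    lia.
  by move/domgP: hd; apply.
- move=> hL m hm; rewrite -!hab; first exact: hc.
  all: have : Q n * 3 ^ m.+1 <= Q n * 3 ^ n.+1 by rewrite leq_mul2l leq_pexp2l //; lia.
  all: have : Q n * 3 ^ m <= Q n * 3 ^ m.+1 by rewrite leq_mul2l leq_pexp2l //; lia.
  all: lia.
Qed.


Lemma perfect : perfect_cantor.
Proof.
move=> a k; exists (fun i => if i == k then ~~ a k else a i); split.
- move=> i hi; case: eqP => // E; lia.
- move/(f_equal (fun f => f k)); rewrite eqxx; by case: (a k).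
Qed.

Lemma theta_pow3 L m : L != 1 -> 1 <= m -> theta L (3 ^ m) = 3 ^ m.+1.
Proof.
move=> hL hm; rewrite theta3 // ?expnS //.
- move/inM_2; rewrite Euclid_dvdX //; lia.
- rewrite subn1; apply: (not_inM_pred (p := 3)); [by right | | by rewrite expn_gt0].
  by rewrite -(prednK hm) expnS dvdn_mulr.
Qed.

Lemma thn_pow3 L n m : L != 1 -> 1 <= m -> theta_n L n (Q n * 3 ^ m) = Q n * 3 ^ m.+1.
Proof.
move=> hL hm; rewrite thn_S ?muln_gt0 ?Q_gt0 ?expn_gt0 ?dvdn_mulr // mulKn ?Q_gt0 //.
by rewrite theta_pow3.
Qed.

Lemma Q3_neq n m : 1 <= m -> Q n * 3 ^ m <> Q n.
Proof.
move=> hm E. have : Q n * 3 ^ m >= Q n * 3.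
  by rewrite leq_mul2l; apply/orP; right; rewrite -{1}(expn1 3) leq_pexp2l.
have := Q_gt0 n; lia.
Qed.

Section A2.
Variables (L n : nat).
Definition d0 : cantor := fun p => p == 3 * Q n.

Lemma image_char b : Defs.image (DL L n) (g L n) b <-> b (Q n) = true /\ DL L n (pre L n d0 b).
Proof.
split.
- case=> a [[hd hc] <-]; split; first by rewrite gE eqxx.
  set a' := pre L n d0 (g L n a).
  have hS p k : pinv L n p = Some k -> a' p = a p.
    move=> E; have [hk <-] := inv_Some E; rewrite /a' /pre inv_th // gE.
    by case: eqP.
  have hN p : pinv L n p = None -> a' p = d0 p by rewrite /a' /pre => ->.
  have aQ := domg_Q hd.
  have iQ : pinv L n (Q n) = None.
    case E: pinv => [k|] //; have [hk hth] := inv_Some E; by have := thn_neqQ hk hth.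
  have i3Q : pinv L n (3 * Q n) = None.
    case E: pinv => [k|] //; have [hk hth] := inv_Some E.
    by move: hth; rewrite -(thn_Q L n) => /thn_inj.
  split.
  + apply/domgP => i hi; have /domgP := hd => hd'.
    rewrite -hd' //.
    case: (ltnP i (Q n)) => hiQ.
    * apply: (hS i i); rewrite -{1}(thn_small L hiQ) inv_th //; lia.
    * have -> : i = Q n by lia.
      rewrite hN // aQ /d0; apply/eqP; have := Q_gt0 n; lia.
  + move=> hL m hm.
    have v0 : a' (Q n * 3 ^ 0) = false.
      rewrite expn0 muln1 hN // /d0; apply/eqP; have := Q_gt0 n; lia.
    have v1 : a' (Q n * 3 ^ 1) = true by rewrite expn1 mulnC hN // /d0 eqxx.
    have v2 k : 2 <= k -> a' (Q n * 3 ^ k) = a (Q n * 3 ^ k).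
      case: k => [|k] hk; first lia.
      apply: (hS _ (Q n * 3 ^ k)).
      rewrite -(thn_pow3 n hL (m := k)); last lia.
      rewrite inv_th //; apply: Q3_neq; lia.
    have a0 : a (Q n * 3 ^ 0) = false by rewrite expn0 muln1.
    case: m hm => [|[|m]] hm.
    * by rewrite v0 v1.
    * rewrite v1 v2 //. have := hc hL 1 hm. have := hc hL 0 (leq0n _). rewrite a0.
      case: (a (Q n * 3 ^ 1)); case: (a (Q n * 3 ^ 2)) => //.
    * rewrite !v2 //; exact: hc.
- case=> hb hD; exists (pre L n d0 b); split => //; exact: g_pre.
Qed.

Lemma image_dep : dep (Q n * 3 ^ n.+1).+1
  (fun b => b (Q n) = true /\ DL L n (pre L n d0 b)).
Proof.
move=> b b' hbb' [hb hD]; split.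
- rewrite -hbb' //. have : Q n <= Q n * 3 ^ n.+1 by rewrite leq_pmulr // expn_gt0. lia.
- apply: DL_dep hD; apply: pre_agree => //.
Qed.

Lemma cont : continuous_on (DL L n) (g L n).
Proof.
move=> a _ k; exists (3 * k + 3 * Q n) => b _ hab i hi; rewrite !gE.
case: eqP => // _; apply: hab; have := thn_le L n i; lia.
Qed.

Lemma openmap : open_map_on (DL L n) (g L n).
Proof.
move=> U hU _ b [a [hUa <-]].
have [K hK] := hU a hUa.
exists (K + (Q n).+1) => b' hb'.
exists (pre L n a b'); split.
- apply: hK; rewrite -{1}(pre_g L n a); apply: pre_agree => //.
  apply: agree_le hb'; lia.
- apply: g_pre; rewrite -hb'; [by rewrite gE eqxx | lia].
Qed.

End A2.

Lemma no_inj (H : cantor -> nat) : ~ (forall x y, H x = H y -> x = y).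
Proof.
move=> Hinj.
pose f (m : nat) : cantor :=
  match excluded_middle_informative (exists x, H x = m) with
  | left e => proj1_sig (constructive_indefinite_description _ e)
  | right _ => fun _ => false end.
pose d : cantor := fun m => ~~ f m m.
have : f (H d) = d.
  rewrite /f; case: excluded_middle_informative => [e|ne]; last by case: ne; exists d.
  case: (constructive_indefinite_description _ e) => x /= hx; exact: Hinj.
move=> E; have E2 : f (H d) (H d) = ~~ f (H d) (H d) by exact: (f_equal (fun u => u (H d)) E).
by move: E2; case: (f (H d) (H d)).
Qed.

Lemma not_ctbl L n U : is_open U -> (exists a, U a) -> ~ countable_to_one_on U (g L n).
Proof.
move=> hU [a0 ha0] hc.
have [K hK] := hU a0 ha0.
pose F p := [&& 0 < p, Q n %| p & p %/ Q n %% 6 == 2].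
pose E (x : cantor) : cantor := fun p =>
  if F p && (6 * K <= p %/ Q n) then x (p %/ Q n %/ 6 - K) else a0 p.
have hE x : agree K a0 (E x).
  move=> p hp; rewrite /E; case: ifP => // /andP [_ h].
  have := leq_div p (Q n); lia.
have hEv x j : E x (Q n * (6 * (K + j) + 2)) = x j.
  rewrite /E mulKn ?Q_gt0 //.
  have -> : F (Q n * (6 * (K + j) + 2)).
    rewrite /F muln_gt0 Q_gt0 addn_gt0 orbT dvdn_mulr //= mulKn ?Q_gt0 //; lia.
  have -> : 6 * K <= 6 * (K + j) + 2 by lia.
  congr x; lia.
have hEg x : g L n (E x) = g L n a0.
  apply: functional_extensionality => k; rewrite !gE; case: eqP => // _.
  rewrite /E; case: ifP => // /andP [hF _]; exfalso; move: hF; rewrite /F.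
  case h: ((0 < k) && (Q n %| k)).
  - case/andP: h => h0 hd; rewrite thn_S // mulKn ?Q_gt0 //.
    by rewrite (negbTE (theta_mod6 L (divQ_ge1 h0 hd))) !andbF.
  - rewrite thn_nonS ?h //; case/and3P => h1 h2 _; by rewrite h1 h2 in h.
have [h hh] := hc (g L n a0).
apply: (@no_inj (fun x => h (E x))) => x y hxy.
have := hh (E x) (E y) (conj (hK _ (hE x)) (hEg x)) (conj (hK _ (hE y)) (hEg y)) hxy.
move=> Exy; apply: functional_extensionality => j; by rewrite -hEv Exy hEv.
Qed.


Fixpoint val (a : cantor) (k : nat) : nat :=
  match k with 0 => 0 | k'.+1 => 2 * val a k' + a k' end.

Lemma val_lt a k : val a k < 2 ^ k.
Proof. elim: k => //= k IH; rewrite expnS; case: (a k) => /=; lia. Qed.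

Lemma val_bits a k i : i < k -> odd (val a k %/ 2 ^ (k - 1 - i)) = a i.
Proof.
elim: k i => // k IH i hi /=.
case: (ltnP i k) => hik.
- have -> : k.+1 - 1 - i = (k - 1 - i).+1 by lia.
  rewrite expnS divnMA.
  have -> : (2 * val a k + a k) %/ 2 = val a k by case: (a k) => /=; lia.
  exact: IH.
- have -> : i = k by lia.
  have -> : k.+1 - 1 - k = 0 by lia.
  rewrite expn0 divn1 oddD oddM /=. by case: (a k).
Qed.

Lemma psi_val a k : psi (2 ^ k - 1 + val a k) = mkseq a k.
Proof.
have h1 : 0 < 2 ^ k by rewrite expn_gt0.
have hv := val_lt a k.
have hn : (2 ^ k - 1 + val a k).+1 = 2 ^ k + val a k by lia.
rewrite /psi hn.
have -> : trunc_log 2 (2 ^ k + val a k) = k.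
  apply: trunc_log_eq => //; rewrite expnS; apply/andP; split; lia.
have -> : 2 ^ k + val a k - 2 ^ k = val a k by lia.
rewrite /mkseq; apply/eq_in_map => i; rewrite mem_iota add0n => hi.
by rewrite val_bits.
Qed.

Lemma closure_graphs L : forall a, in_closure_graphs (fun n => DL L n) (fun n => g L n) a a.
Proof.
move=> a k.
set n := 2 ^ k - 1 + val a k.
have hkn : k <= n by have := ltn_expl k (isT : 1 < 2); rewrite /n; lia.
have hnQ := n_lt_Q n.
have hpsi : psi n = mkseq a k by rewrite /n psi_val.
pose c : cantor := fun p => if p < k then a p else dec (exists m, p = Q n * 3 ^ m /\ odd m).
have cQ m : c (Q n * 3 ^ m) = odd m.
  rewrite /c ifF; last first.
    have : Q n <= Q n * 3 ^ m by rewrite leq_pmulr // expn_gt0.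
    move=> h; rewrite ltnNge; apply/negbF; lia.
  case E: (dec _).
  - move/dec_true: E => [m' [/eqP E hm']]; move: E.
    rewrite eqn_pmul2l ?Q_gt0 // eqn_exp2l // => /eqP ->; by [].
  - move/dec_false: E => E; case hm: (odd m) => //; exfalso; apply: E; by exists m.
have csmall i : k <= i -> i < Q n -> c i = false.
  move=> h1 h2; rewrite /c ifF; last by apply: negbTE; rewrite -leqNgt.
  apply/dec_false => [[m [E _]]].
  have : Q n <= Q n * 3 ^ m by rewrite leq_pmulr // expn_gt0.
  lia.
have cQ0 : c (Q n) = false by rewrite -(muln1 (Q n)) -(expn0 3) cQ.
have hc : DL L n c.
  split.
  - apply/domgP => i hi; rewrite nth_rcons size_t.
    case: (ltnP i (Q n)) => hiQ.
    + rewrite /t nth_cat hpsi size_mkseq.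
      case: (ltnP i k) => hik.
      * by rewrite nth_mkseq // /c hik.
      * by rewrite nth_nseq if_same csmall.
    + have -> : i = Q n by lia.
      by rewrite eqxx cQ0.
  - move=> _ m _; rewrite !cQ /=; by case: (odd m).
exists n, c; split => //; split.
- by move=> i hi; rewrite /c hi.
- move=> i hi; rewrite gE; have hiQ : i < Q n by lia.
  rewrite (ltn_eqF hiQ) thn_small // /c hi //.
Qed.

Lemma no_fix L n a : DL L n a -> g L n a <> a.
Proof.
move=> [hd _] E; have := domg_Q hd; rewrite -{1}E gE eqxx; by [].
Qed.


Fixpoint rp (L : nat) (s : seq nat) (k : nat) : option nat :=
  match s with
  | [::] => Some k
  | n :: s' => if k == Q n then None else rp L s' (theta_n L n k)
  end.

Lemma gs_cons L n s a : gs L (n :: s) a =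
  match gs L s a with Some b => if domg n b then Some (g L n b) else None | None => None end.
Proof. by []. Qed.

Lemma gs_rp L s a b : gs L s a = Some b ->
  forall k, b k = match rp L s k with Some p => a p | None => true end.
Proof.
elim: s b => [|n s IH] b; first by case=> <-.
rewrite gs_cons; case E: (gs L s a) => [b'|] //; case: (domg n b') => // [[<-]] k.
rewrite gE /=; case: eqP => // _; exact: IH.
Qed.

Lemma rp_rcons L s z k : rp L (rcons s z) k =
  match rp L s k with Some p => if p == Q z then None else Some (theta_n L z p) | None => None end.
Proof. elim: s k => [|n s IH] k /=; first by []. case: eqP => //. Qed.

Lemma sminus_rcons s z : sminus (rcons s z) = s.
Proof. by rewrite /sminus size_rcons /= -cats1 take_size_cat. Qed.

Lemma sorted_rcons_info s z : sorted ltn (rcons s z) -> pairwise ltn s /\ all (fun y => y < z) s.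
Proof.
rewrite sorted_pairwise; last exact: ltn_trans.
rewrite -cats1 pairwise_cat allrel1r /= andbT => /andP [h1 h2]; split => //.
Qed.

Lemma size_le_gen s m z : pairwise ltn s -> all (fun y => m <= y < z) s -> size s <= z - m.
Proof.
elim: s m => [|x s IH] m //= /andP [hx hpw] /andP [/andP [h1 h2] hall].
have : size s <= z - x.+1.
  apply: IH => //; apply/allP => y hy; move/allP: hx => /(_ y hy) hxy.
  move/allP: hall => /(_ y hy) /andP [_ h]; by apply/andP; split.
lia.
Qed.

Lemma size_le s z : pairwise ltn s -> all (fun y => y < z) s -> size s <= z.
Proof.
move=> h1 h2; have := @size_le_gen s 0 z h1; rewrite subn0; apply.
apply/allP => y hy; by move/allP: h2 => /(_ y hy).
Qed.

Lemma q_gap3 n z : 3 <= z -> n < z -> q n + 31 <= q z.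
Proof.
move=> h3 hn.
have := q_gap (n := z.-1) (z := z) (ltac:(lia)) (ltac:(lia)).
have := q_le (m := n) (n := z.-1) (ltac:(lia)). lia.
Qed.

Lemma cop3Q n e : coprime (3 ^ e) (2 ^ n).
Proof. apply: coprimeXl; apply: coprimeXr; by []. Qed.
Lemma copQ3 n e : coprime (2 ^ n) (3 ^ e).
Proof. apply: coprimeXl; apply: coprimeXr; by []. Qed.

Lemma Qmul2_dvd m n : q m < q n -> Q m * 2 %| Q n.
Proof. move=> h; rewrite -expnSr; apply: dvdn_exp2l; lia. Qed.

Lemma inM_intro L j e : 2 <= L -> 2 ^ 31 %| j -> 3 ^ e %| j -> L <= e.+1 -> 0 < j -> inM L j.
Proof.
move=> hL h2 h3 hLe hj.
have he : 1 <= e by lia.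
have h3' : 3 %| j by apply: dvdn_trans h3; rewrite -{1}(expn1 3); apply: dvdn_exp2l.
have hC : 2 ^ 31 * 3 %| j.
  rewrite Gauss_dvd; first by rewrite h2 h3'.
  exact: (coprimeXl 31 (isT : coprime 2 3)).
have hCp : 0 < 2 ^ 31 * 3 by rewrite muln_gt0 T_gt0.
exists (j %/ (2 ^ 31 * 3)); split; [|split].
- rewrite divn_gt0; [exact: (dvdn_leq hj hC) | exact: hCp].
- move=> [p0 [l [hl E]]].
  have : 3 ^ e %| 2 ^ 31 * 3 * (2 ^ p0 * 3 ^ l) by rewrite -E mulnC divnK.
  rewrite mulnACA -expnD -expnS Gauss_dvdr ?cop3Q // dvdn_Pexp2l //.
  lia.
- by rewrite mulnC divnK.
Qed.

Lemma notM_23 L d i : 2 <= L -> i <= L - 2 -> ~ inM L (2 ^ d * 3 ^ i).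
Proof.
move=> hL hi [k [hk [hP E]]]; apply: hP.
have h2 : 2 ^ 31 %| 2 ^ d * 3 ^ i by rewrite E -mulnA; apply: dvdn_mulr; exact: dvdnn.
have h3 : 3 %| 2 ^ d * 3 ^ i by rewrite E mulnAC dvdn_mull.
rewrite Gauss_dvdl ?copQ3 // dvdn_Pexp2l // in h2.
have hi1 : 1 <= i.
  case: i h3 {hi E} => // h3; move: h3; by rewrite expn0 muln1 Euclid_dvdX.
exists (d - 31), i.-1; split; first lia.
have E2 : 2 ^ d * 3 ^ i = 2 ^ 31 * 3 * (2 ^ (d - 31) * 3 ^ i.-1).
  by rewrite mulnACA -expnD -expnS subnKC // prednK.
move/eqP: E; rewrite E2 eqn_pmul2l ?muln_gt0 ?T_gt0 // => /eqP <-.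
done.
Qed.

Lemma theta_dvd3 L j : L != 1 -> ~ inM L j -> 3 %| theta L j.
Proof.
move=> hL hM; case: (theta_cases j hL) => [[h _]|[_ [h ->]]|[_ [_ ->]]] //.
- apply: dvdn_sub; [exact: dvdn_mulr | exact: dvdnn].
- exact: dvdn_mulr.
Qed.


Lemma dead L D s r : (forall m, m \in s -> D %| Q m) -> ~~ ((0 < r) && (D %| r)) ->
  rp L s r = Some r.
Proof.
elim: s => //= n s IH hD hr.
have hDn : D %| Q n by apply: hD; rewrite mem_head.
rewrite ifF; last first.
  apply/eqP => E; move: hr; by rewrite E Q_gt0 hDn.
rewrite thn_nonS.
- apply: IH => // m hm; apply: hD; by rewrite in_cons hm orbT.
- apply/negP => /andP [h0 hd]; move/negP: hr; apply; rewrite h0 /=.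
  exact: dvdn_trans hDn hd.
Qed.

Section Tail.
Variables (L z : nat).
Hypothesis hL : 2 <= L.
Let hL1 : L != 1. Proof. by rewrite neq_ltn hL orbT. Qed.

Definition Bad p := (0 < p) && (Q z %| p).

Lemma step_nonS n s' r p : all (ltn n) s' -> q n + 31 <= q z ->
  ~~ ((0 < r) && (Q n %| r)) -> rp L (n :: s') r = Some p -> ~~ Bad p.
Proof.
move=> hall hqz hr.
rewrite (@dead L (Q n)) // => [[<-]|m].
- apply/negP => /andP [h0 hd]; move/negP: hr; apply; rewrite h0 /=.
  apply: dvdn_trans hd; apply: Q_dvd; lia.
- rewrite in_cons => /orP [/eqP ->|hm] //; apply: Q_dvd.
  move/allP: hall => /(_ m hm) h; apply: ltnW; exact: q_mono.
Qed.

Lemma step_M n s' r p : all (ltn n) s' -> q n + 31 <= q z ->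
  0 < r -> Q n %| r -> inM L (r %/ Q n) -> rp L (n :: s') r = Some p -> ~~ Bad p.
Proof.
move=> hall hqz h0 hd hM /=.
rewrite ifF; last first.
  apply/eqP => E; move: hM; rewrite E divnn Q_gt0 => /inM_2; by [].
have hr : r = Q n * (r %/ Q n) by rewrite mulnC divnK.
move: hM; set j := r %/ Q n => hM.
have h2j := inM_2 hM.
rewrite thn_S // -/j thetaM //.
have hnd : ~~ ((0 < Q n * (3 * j + 3)) && (Q n * 2 %| Q n * (3 * j + 3))).
  apply/negP => /andP [_]; rewrite dvdn_pmul2l ?Q_gt0 // => h.
  move: h2j h; lia.
rewrite (@dead L (Q n * 2)) // => [[<-]|m hm].
- apply/negP => /andP [h0' hd']; move/negP: hnd; apply; rewrite h0' /=.
  apply: dvdn_trans hd'; apply: Qmul2_dvd; lia.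
- apply: Qmul2_dvd; move/allP: hall => /(_ m hm) h; exact: q_mono.
Qed.

Lemma tail s : pairwise ltn s -> (forall m, m \in s -> q m + 31 <= q z) ->
  forall r e p, 0 < size s -> 1 <= e -> 3 ^ e %| r -> L <= e + size s ->
  rp L s r = Some p -> ~~ Bad p.
Proof.
elim: s => // n s' IH.
rewrite pairwise_cons => /andP [hall hpw] hq r e p _ he h3 hLe.
have hqz : q n + 31 <= q z by apply: hq; rewrite mem_head.
case hS: ((0 < r) && (Q n %| r)); last by apply: step_nonS => //; rewrite hS.
case/andP: hS => h0 hd.
case: (excluded_middle_informative (inM L (r %/ Q n))) => hM.
  exact: step_M hM.
have hrQ : (r == Q n) = false.
  apply/eqP => E; move: h3; rewrite E => h.
  have : 3 ^ e %| 1 by rewrite -(Gauss_dvdr 1 (cop3Q (q n) e)) muln1.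
  rewrite dvdn1 -(expn0 3) eqn_exp2l // => /eqP; lia.
have hr : r = Q n * (r %/ Q n) by rewrite mulnC divnK.
move: hM; set j := r %/ Q n => hM.
have h3ej : 3 ^ e %| j by move: h3; rewrite hr Gauss_dvdr // cop3Q.
have h3j : 3 %| j by apply: dvdn_trans h3ej; rewrite -{1}(expn1 3); apply: dvdn_exp2l.
have hj1 : 1 <= j by apply: divQ_ge1.
have hM1 : ~ inM L (j - 1).
  rewrite subn1; apply: (not_inM_pred (p := 3)) => //; by right.
rewrite /= hrQ.
rewrite thn_S // -/j theta3 //.
have h3r : Q n * (3 * j) = 3 * r by rewrite hr; lia.
rewrite h3r.
case: s' IH hall hpw hq hLe => [|n2 s''] IH hall hpw hq hLe.
- move=> [<-]; apply/negP => /andP [_ hb].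
  have hb' : Q z %| r by move: hb; rewrite Gauss_dvdr; [by [] | exact: coprimeXl].
  have h2 : 2 ^ 31 %| j.
    have : Q n * 2 ^ 31 %| Q n * j.
      rewrite -hr -expnD; apply: dvdn_trans hb'; apply: dvdn_exp2l; lia.
    move=> h; rewrite (dvdn_pmul2l (Q_gt0 n)) in h; exact: h.
  apply: hM; apply: (inM_intro (e := e) hL h2 h3ej _ hj1); move: hLe => /=; lia.
- apply: (IH hpw _ (3 * r) e.+1) => //.
  + move=> m hm; apply: hq; by rewrite in_cons hm orbT.
  + by rewrite expnS dvdn_pmul2l.
  + move: hLe => /=; lia.
Qed.

Lemma key s0 s'' : pairwise ltn (s0 :: s'') -> (forall m, m \in s0 :: s'' -> q m + 31 <= q z) ->
  size (s0 :: s'') = L -> forall k p, rp L (s0 :: s'') k = Some p -> ~~ Bad p.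
Proof.
rewrite pairwise_cons => /andP [hall hpw] hq hsz k p.
have hqz : q s0 + 31 <= q z by apply: hq; rewrite mem_head.
case hS: ((0 < k) && (Q s0 %| k)); last by apply: step_nonS => //; rewrite hS.
case/andP: hS => h0 hd.
case: (excluded_middle_informative (inM L (k %/ Q s0))) => hM.
  exact: step_M hM.
rewrite /=; case: eqP => // _.
apply: (tail hpw _ (e := 1)) => //.
- move=> m hm; apply: hq; by rewrite in_cons hm orbT.
- move: hsz => /= hsz; lia.
- rewrite expn1 thn_S //; apply: dvdn_mull; exact: theta_dvd3.
- move: hsz => /= hsz; lia.
Qed.

End Tail.


Lemma not_bad_g L z p : ~~ ((0 < p) && (Q z %| p)) ->
  (if p == Q z then None else Some (theta_n L z p)) = Some p.
Proof.
move=> h; rewrite ifF ?thn_nonS //.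
apply/eqP => E; move: h; by rewrite E Q_gt0 dvdnn.
Qed.

Lemma t0 n : 0 < size (psi n) -> nth false (t n) 0 = nth false (psi n) 0.
Proof. by move=> h; rewrite /t nth_cat h. Qed.

Lemma psi1 : psi 1 = [:: false]. Proof. by vm_compute. Qed.
Lemma psi2 : psi 2 = [:: true]. Proof. by vm_compute. Qed.

Lemma gs_012 L a : gs L [:: 0; 1; 2] a = None.
Proof.
rewrite gs_cons (gs_cons L 1) (gs_cons L 2).
have -> : gs L [::] a = Some a by [].
case E2: (domg 2 a) => //; case E1: (domg 1 (g L 2 a)) => //.
have h2 := domg_small (i := 0) E2 (Q_gt0 2).
have h1 := domg_small (i := 0) E1 (Q_gt0 1).
move: h1 h2; rewrite !t0 ?psi1 ?psi2 // gE.
rewrite (ltn_eqF (Q_gt0 2)) thn_small ?Q_gt0 //= => ->; by [].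
Qed.

Lemma rp_pow L z s i : 2 <= L -> (forall n, n \in s -> n < z) -> i + size s <= L - 1 ->
  rp L s (Q z * 3 ^ i) = Some (Q z * 3 ^ (i + size s)).
Proof.
move=> hL; elim: s i => [|n s IH] i hs hi; first by rewrite addn0.
have hnz : n < z by apply: hs; rewrite mem_head.
have hq := q_mono hnz.
set d := q z - q n.
have hQ : Q z = Q n * 2 ^ d by rewrite -expnD subnKC //; lia.
have hd1 : 1 <= d by rewrite /d; lia.
rewrite /= ifF; last first.
  apply/eqP => E.
  have : Q n < Q z by rewrite ltn_exp2l.
  have : Q z <= Q z * 3 ^ i by rewrite leq_pmulr // expn_gt0.
  lia.
have hpos : 0 < Q z * 3 ^ i by rewrite muln_gt0 Q_gt0 expn_gt0.
rewrite thn_S //; last by rewrite hQ -mulnA dvdn_mulr.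
have hj : Q z * 3 ^ i %/ Q n = 2 ^ d * 3 ^ i by rewrite hQ -mulnA mulKn // Q_gt0.
rewrite hj theta3 //.
- have -> : Q n * (3 * (2 ^ d * 3 ^ i)) = Q z * 3 ^ i.+1 by rewrite hQ expnS; nia.
  rewrite IH.
  + by rewrite addSnnS.
  + move=> m hm; apply: hs; by rewrite in_cons hm orbT.
  + move: hi => /=; lia.
- by rewrite neq_ltn hL orbT.
- apply: notM_23 => //; move: hi => /=; lia.
- rewrite subn1; apply: (not_inM_pred (p := 2)); first by left.
  + by rewrite -(prednK hd1) expnS -mulnA dvdn_mulr.
  + by rewrite muln_gt0 !expn_gt0.
Qed.

Lemma partc L : 1 <= L -> forall (s : seq nat) (a b c : cantor),
      sorted ltn s -> size s = L.+1 ->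
      gs L s a = Some b -> gs L (sminus s) a = Some c -> b = c.
Proof.
move=> hL1 s a b c; case/lastP: s => [|s' z] //.
move=> hs; rewrite size_rcons => -[hsz] hb hc; rewrite sminus_rcons in hc.
have [hpw hlt] := sorted_rcons_info hs.
have Hb := gs_rp hb; have Hc := gs_rp hc.
suff Hbad : forall k p, rp L s' k = Some p -> ~~ ((0 < p) && (Q z %| p)).
  apply: functional_extensionality => k; rewrite Hb Hc rp_rcons.
  case E: (rp L s' k) => [p|] //; by rewrite not_bad_g // (Hbad k).
have hzL := size_le hpw hlt.
case: (eqVneq L 1) => [EL|hL].
- rewrite EL in hsz; case: s' hsz hpw hlt {hb hc Hb Hc hs hzL} => [|s0 [|]] // _ _.
  rewrite /= andbT => hs0 k p /=; case: eqP => // hk [<-].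
  have h2 : Q s0 * 2 %| Q z by apply: Qmul2_dvd; exact: q_mono.
  case hS: ((0 < k) && (Q s0 %| k)).
  + case/andP: hS => h0 hd; rewrite thn_S // EL theta1 //.
    apply/negP => /andP [_ hz].
    have : Q s0 * 2 %| Q s0 * (2 * (k %/ Q s0) + 1) by apply: dvdn_trans hz.
    rewrite dvdn_pmul2l ?Q_gt0 //; lia.
  + rewrite thn_nonS ?hS //; apply/negP => /andP [h0 hz]; move: hS; rewrite h0 /=.
    suff -> : Q s0 %| k by []. apply: dvdn_trans hz; apply: dvdn_trans (dvdn_mulr 2 (dvdnn _)) h2.
- have hL2 : 2 <= L by move: hL1 hL; lia.
  case: s' hsz hpw hlt {hc Hb Hc hs} hzL hb => [|s0 s''] hsz hpw hlt hzL hb; first by move: hsz => /=; lia.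
  have hz3 : 3 <= z.
    case: (ltnP z 3) => // hz; exfalso.
    have hz2 : z = 2 by move: hzL; rewrite hsz; lia.
    have EL : L = 2 by move: hzL; rewrite hsz; lia.
    move: hsz hpw hlt hzL hb; rewrite hz2 EL.
    case: s'' => [|s1 [|s2 s3]] hsz hpw hlt _ hb; try by move: hsz => /=; lia.
    move: hpw hlt => /= hpw hlt.
    have E0 : s0 = 0 by move: hpw hlt; lia.
    have E1 : s1 = 1 by move: hpw hlt; lia.
    by move: hb; rewrite E0 E1 (_ : rcons [:: 0; 1] 2 = [:: 0; 1; 2]) // gs_012.
  move=> k p; apply: (key hL2 hpw) => // m hm.
  apply: q_gap3 => //; by move/allP: hlt => /(_ m hm).
Qed.


Lemma partb L : forall (s : seq nat) (a b c : cantor),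
      sorted ltn s -> 2 <= size s <= L ->
      DL L (nth 0 s (size s).-1) a ->
      gs L s a = Some b -> gs L (sminus s) a = Some c -> b <> c.
Proof.
move=> s a b c; case/lastP: s => [|s' z] //.
move=> hs; rewrite size_rcons => /andP [h2 hsL].
rewrite nth_rcons /= ltnn eqxx => -[_ hD] hb hc; rewrite sminus_rcons in hc.
have [hpw hlt] := sorted_rcons_info hs.
have hzm := size_le hpw hlt.
have hL2 : 2 <= L by lia.
have hL : L != 1 by rewrite neq_ltn hL2 orbT.
have Hb := gs_rp hb; have Hc := gs_rp hc.
have hlt' : forall n, n \in s' -> n < z by move=> n hn; move/allP: hlt => /(_ n hn).
have hi : 0 + size s' <= L - 1 by lia.
have hrp := @rp_pow L z s' 0 hL2 hlt' hi.
rewrite expn0 muln1 add0n in hrp.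
move=> E.
have := Hb (Q z); have := Hc (Q z); rewrite E rp_rcons hrp => ->.
rewrite ifF; last by apply/negbTE/eqP; apply: Q3_neq; rewrite ltnS in h2.
rewrite (thn_pow3 _ hL); last by rewrite ltnS in h2.
exact: (hD hL _ hzm).
Qed.

Unset Implicit Arguments.
Theorem lemma5p2 (L : nat) : 1 <= L ->
  strongly_complex (fun n => DL L n) (fun n => g L n) /\
  (forall (s : seq nat) (a b c : cantor),
      sorted ltn s -> 2 <= size s <= L ->
      DL L (nth 0 s (size s).-1) a ->
      gs L s a = Some b -> gs L (sminus s) a = Some c -> b <> c) /\
  (forall (s : seq nat) (a b c : cantor),
      sorted ltn s -> size s = L.+1 ->
      gs L s a = Some b -> gs L (sminus s) a = Some c -> b = c).
Proof.
move=> hL1; split; [|split; [exact: partb | exact: partc]].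
split.
- split; [by exists (fun _ => false) | exact: perfect].
- move=> n; split.
  + exact: (dep_clopen (fun b => iff_refl _) (@DL_dep L n)).
  + exact: (dep_clopen (@image_char L n) (@image_dep L n)).
  + exact: cont.
  + exact: openmap.
- move=> a; split; [exact: closure_graphs | move=> n; exact: no_fix].
- move=> n U hU _ hne; exact: not_ctbl.
Qed.
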